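(* Let $G$ be a finitely generated group such that $[e]_g$ is a subgroup of $G$ for every $g\in G$. Suppose that for every sequence $g_1,g_2,\dots$ of elements of $G$ the intersection $\bigcap_{k\ge1}[e]_{[g_1,\dots,g_k]}$ is trivial. Then for every $k\ge1$ either $\gamma_k(G)=\{e\}$ or $\gamma_k(G)\neq\gamma_{k+1}(G)$.
   Context: $[x,y]=x^{-1}y^{-1}xy$, left-normed commutators $[y_1,\dots,y_{m+1}]=[[y_1,\dots,y_m],y_{m+1}]$, $[y_1]=y_1$. For $g\in G$, $[e]_g=\{[x,g]\mid x\in G\}$. $\gamma_1(G)=G$, $\gamma_{k+1}(G)=[\gamma_k(G),G]$. *)

(* Defs.v *)
From HB Require Import structures.
From mathcomp Require Import all_boot.
Set Implicit Arguments. Unset Strict Implicit. Unset Printing Implicit Defensive.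

Local Open Scope group_scope.

(* Subsets of G are predicates G -> Prop (G may be infinite). *)
Definition is_subgroup (G : groupType) (H : G -> Prop) : Prop :=
  [/\ H 1, (forall x y, H x -> H y -> H (x * y)) & (forall x, H x -> H x^-1)].

Definition generated (G : groupType) (S : G -> Prop) : G -> Prop :=
  fun x => forall H : G -> Prop, is_subgroup H -> (forall s, S s -> H s) -> H x.

Definition finitely_generated (G : groupType) : Prop :=
  exists s : seq G, forall x : G, generated (fun y => y \in s) x.

(* [e]_g = { [x,g] | x in G }, with commg x y = x^-1 y^-1 x y *)
Definition comm_class (G : groupType) (g : G) : G -> Prop :=
  fun y => exists x : G, y = commg x g.

(* left-normed commutator of a sequence: lcomm g n = [g 0, g 1, ..., g n]
   (i.e. [g_1,...,g_{n+1}] with 1-based indexing) *)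
Fixpoint lcomm (G : groupType) (g : nat -> G) (n : nat) : G :=
  match n with
  | 0 => g 0
  | n'.+1 => commg (lcomm g n') (g n)
  end.

(* lcs n = gamma_{n+1}(G) *)
Fixpoint lcs (G : groupType) (n : nat) : G -> Prop :=
  match n with
  | 0 => fun _ => True
  | n'.+1 => generated (fun y => exists a b : G, lcs n' a /\ y = commg a b)
  end.

(* gamma k = gamma_k(G) for k >= 1 (gamma 0 is junk, equal to G) *)
Definition gamma (G : groupType) (k : nat) : G -> Prop := @lcs G k.-1.

(* Main.v *)
Require Import Defs.
From HB Require Import structures.
From mathcomp Require Import all_boot.
From mathcomp Require Import boolp classical_sets.

Set Implicit Arguments. Unset Strict Implicit.
Local Open Scope group_scope.

Ltac gnorm := rewrite /commg /conjg; rewrite ?invgM ?invgK;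
  repeat progress (rewrite ?mulgA ?mulgV ?mulVg ?mul1g ?mulg1 ?mulgK ?mulgVK ?invg1 ?invgK); try done.

Definition nsg (G : groupType) (X : G -> Prop) :=
  [/\ X 1, (forall x y, X x -> X y -> X (x * y)), (forall x, X x -> X x^-1)
    & (forall x y, X x -> X (x ^ y))].

Lemma nsg_sub (G : groupType) (X : G -> Prop) : nsg X -> is_subgroup X.
Proof. by case=> *; split. Qed.

Lemma gen_base (G : groupType) (S : G -> Prop) s : S s -> generated S s.
Proof. by move=> Ss H _; apply. Qed.

Lemma gen_subgroup (G : groupType) (S : G -> Prop) : is_subgroup (generated S).
Proof.
split.
- by move=> H [].
- by move=> x y hx hy H HH hS; case: (HH) => _ hM _; apply: hM; [apply: hx|apply: hy].
- by move=> x hx H HH hS; case: (HH) => _ _ hI; apply: hI; apply: hx.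
Qed.

Lemma gen_normal (G : groupType) (S : G -> Prop) :
  (forall s y, S s -> S (s ^ y)) -> forall x y, generated S x -> generated S (x ^ y).
Proof.
move=> hS x y hx H [h1 hM hI] hSH.
apply: (hx (fun z => H (z ^ y))).
- split; first by rewrite conj1g.
  + by move=> a b ha hb; rewrite conjMg; apply: hM.
  + by move=> a ha; rewrite conjVg; apply: hI.
- by move=> s Ss; apply: hSH; apply: hS.
Qed.

Lemma lcs_nsg (G : groupType) n : nsg (@lcs G n).
Proof.
elim: n => [|n [h1 hM hI hC]] /=; first by split.
have hN : forall s y : G, (exists a b : G, lcs n a /\ s = commg a b) ->
   (exists a b, lcs n a /\ s ^ y = commg a b).
  move=> s y [a [b [ha ->]]]; exists (a ^ y), (b ^ y); split; first by apply: hC.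
  by rewrite conjRg.
have [g1 gM gI] := gen_subgroup (fun y : G => exists a b : G, lcs n a /\ y = commg a b).
split=> //.
exact: gen_normal.
Qed.

Lemma commL (G : groupType) (x y z : G) : commg (x * y) z = (commg x z) ^ y * commg y z.
Proof. gnorm. Qed.
Lemma commLV (G : groupType) (x z : G) : commg x^-1 z = ((commg x z)^-1) ^ x^-1.
Proof. gnorm. Qed.
Lemma commLJ (G : groupType) (x y z : G) : commg (x ^ y) z = (commg x (z ^ y^-1)) ^ y.
Proof. gnorm. Qed.
Lemma commR (G : groupType) (x y z : G) : commg x (y * z) = commg x z * (commg x y) ^ z.
Proof. gnorm. Qed.
Lemma commRV (G : groupType) (x z : G) : commg x z^-1 = ((commg x z)^-1) ^ z^-1.
Proof. gnorm. Qed.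

Lemma fng (G : groupType) (hfg : finitely_generated G) n :
  exists T : seq G, (forall t, t \in T -> lcs n t) /\
    (forall X : G -> Prop, nsg X -> (forall t, t \in T -> X t) -> forall z, lcs n z -> X z).
Proof.
case: hfg => S hS.
elim: n => [|n [T [hT1 hT2]]].
  exists S; split=> // X hX hXS z _; apply: (hS z) => //; exact: nsg_sub.
exists [seq commg t s | t <- T, s <- S]; split.
  move=> t /allpairsP [[a b] [/= ha hb ->]].
  by apply: gen_base; exists a, b; split=> //; apply: hT1.
move=> X hX hXT z /= hz.
have [X1 XM XI XC] := hX.
apply: hz; first exact: nsg_sub.
move=> w [a [b [ha ->]]].
pose Y := fun a => forall b, X (commg a b).
suff : Y a by apply.
apply: (hT2 Y) => //.
- split.
  + by move=> c; rewrite comm1g.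
  + by move=> x y hx hy c; rewrite commL; apply: XM; [apply: XC|].
  + by move=> x hx c; rewrite commLV; apply: XC; apply: XI.
  + by move=> x y hx c; rewrite commLJ; apply: XC.
- move=> t tT c.
  apply: (hS c (fun c => X (commg t c))).
  + split.
    * by rewrite commg1.
    * by move=> x y hx hy; rewrite commR; apply: XM=> //; apply: XC.
    * by move=> x hx; rewrite commRV; apply: XC; apply: XI.
  + move=> s sS; apply: hXT; apply/allpairsP; by exists (t, s).
Qed.

Lemma K_normal (G : groupType) (g : G) (hsub : is_subgroup (comm_class g)) x y :
  comm_class g x -> comm_class g (x ^ y).
Proof.
case: hsub => _ hM hI [x' ->].
have -> : (commg x' g) ^ y = commg (x' * y) g * (commg y g)^-1 by gnorm.
apply: hM; first by exists (x' * y).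
by apply: hI; exists y.
Qed.

Theorem mainTheorem8 (G : groupType)
  (hfg : finitely_generated G)
  (hsub : forall g : G, is_subgroup (comm_class g))
  (hint : forall g : nat -> G,
      forall x : G, (forall n : nat, comm_class (lcomm g n) x) -> x = 1) :
  forall k : nat, (1 <= k)%N ->
    (forall x : G, @gamma G k x <-> x = 1) \/
    ~ (forall x : G, @gamma G k x <-> @gamma G k.+1 x).
Proof.
case=> [//|k] _; rewrite /gamma /=.
have [htriv|htriv] := pselect (forall x : G, lcs k x <-> x = 1); [by left|right].
move=> Heq.
pose N := @lcs G k.

have [N1 NM NI NC] := lcs_nsg G k.
have [T [hT1 hT2]] := fng hfg k.
pose P := fun A : set G => [/\ (forall x, A x -> N x), ~ (forall x, N x -> A x),
   (forall x y, A x -> A y -> A (x * y)), (forall x, A x -> A x^-1)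
   & (forall x y, A x -> A (x ^ y))].
have [M [[MN MnN MM MI MC] Mmax]] : exists A, P A /\ (forall B, (A `<` B)%classic -> ~ P B).
  apply: Zorn_bigcup => F FP Ftot.
  have FU : forall X Y, F X -> F Y -> exists Z, [/\ F Z, (forall z, X z -> Z z) & (forall z, Y z -> Z z)].
    move=> X Y FX FY; case: (Ftot X Y FX FY) => h.
      by exists Y; split=> // z /h.
    by exists X; split=> // z /h.
  split.
  - by move=> x [X FX Xx]; case: (FP X FX) => + _ _ _ _; apply.
  - move=> hNU.
    have [X0 FX0 X01] := hNU 1 N1.
    suff [X [FX X1 XT]] : exists X, [/\ F X, X 1 & forall t, t \in T -> X t].
      case: (FP X FX) => _ XnN XM XI XC; apply: XnN => z Nz.
      by apply: (hT2 X) => //; split.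
    elim: T hT1 {hT2} => [|t T IH] hT1.
      by exists X0; split.
    have [X [FX X1 XT]] := IH (fun u uT => hT1 u (mem_behead (s:=t :: T) uT)).
    have [Y FY Yt] := hNU t (hT1 t (mem_head _ _)).
    have [Z [FZ XZ YZ]] := FU X Y FX FY.
    exists Z; split=> //; first by apply: XZ.
    move=> u; rewrite in_cons => /orP [/eqP ->|uT]; first by apply: YZ.
    by apply: XZ; apply: XT.
  - move=> x y [X FX Xx] [Y FY Yy].
    have [Z [FZ XZ YZ]] := FU X Y FX FY.
    exists Z => //; case: (FP Z FZ) => _ _ ZM _ _; apply: ZM; [exact: XZ|exact: YZ].
  - move=> x [X FX Xx]; exists X => //; case: (FP X FX) => _ _ _ XI _; exact: XI.
  - move=> x y [X FX Xx]; exists X => //; case: (FP X FX) => _ _ _ _ XC; exact: XC.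
have M1 : M 1.
  apply: contrapT => nM1.
  have M0 : forall x, ~ M x by move=> x Mx; apply: nM1; rewrite -(mulgV x); apply: (MM) => //; apply: (MI).
  apply: (Mmax (fun z => z = 1)).
    by split; [move=> x /M0|move=> /(_ 1 erefl)].
  split.
  - by move=> x ->.
  - move=> hN1; apply: htriv => x; split; first exact: hN1.
    by move=> ->.
  - by move=> x y -> ->; rewrite mulg1.
  - by move=> x ->; rewrite invg1.
  - by move=> x y ->; rewrite conj1g.
have [a [x0 [Na nM]]] : exists a x0, N a /\ ~ M (commg x0 a).
  apply: contrapT => hn; apply: MnN => z Nz.
  have := (proj1 (Heq z) Nz); apply; first by split.
  move=> w [b [c [Nb ->]]].
  rewrite -invgR; apply: (MI).
  apply: contrapT => hM; apply: hn; by exists b, c.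
have [K1 KM KI] := hsub a.
pose L := fun z => exists k m, [/\ comm_class a k, M m & z = k * m].
have KN : forall kk, comm_class a kk -> N kk.
  move=> kk [x ->]; rewrite commgEr; apply: (NM) => //; apply: (NC); exact: (NI).
have : ~ P L.
  apply: Mmax; split.
    by move=> m Mm; exists 1, m; split=> //; rewrite mul1g.
  move=> LM; apply: nM; apply: LM; exists (commg x0 a), 1; split=> //; first by exists x0.
  by rewrite mulg1.
move=> nPL.
have NL : forall z, N z -> L z.
  apply: contrapT => hNL; apply: nPL; split=> //.
  - by move=> z [kk [m [Kk Mm ->]]]; apply: (NM); [apply: (KN)|apply: (MN)].
  - move=> x y [k1 [m1 [Kk1 Mm1 ->]]] [k2 [m2 [Kk2 Mm2 ->]]].
    exists (k1 * k2), (m1 ^ k2 * m2); split; [by apply: (KM)|by apply: (MM) => //; apply: (MC)|].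
    by gnorm.
  - move=> x [kk [m [Kk Mm ->]]].
    exists kk^-1, ((m^-1) ^ kk^-1); split; [by apply: (KI)|by apply: (MC); apply: (MI)|].
    by gnorm.
  - move=> x y [kk [m [Kk Mm ->]]].
    exists (kk ^ y), (m ^ y); split; [by apply: K_normal|by apply: (MC)|].
    by rewrite conjMg.
have [kk [m [[x ex] Mm ea]]] := NL a Na.
rewrite ex in ea.
have em : m = (commg x a)^-1 * a by rewrite {2}ea mulKg.
have Ma : M a.
  rewrite -(invgK a); apply: (MI).
  have -> : a^-1 = ((m^-1) ^ a^-1) ^ x^-1 by rewrite em; gnorm.
  by apply: (MC); apply: (MC); apply: (MI).
apply: nM; rewrite commgEr; apply: (MM) => //; apply: (MC); exact: (MI).
Qed.
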